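(* Let $S$ be an AG-groupoid with a left identity. The following are equivalent: (i) every bi-ideal $B$ of $S$ is idempotent, i.e. $B^{2}=B$; (ii) $A\cap B=AB$ for all bi-ideals $A,B$ of $S$; (iii) the set $L_S$ of bi-ideals of $S$, with the operation $A\wedge B=AB$, is a semilattice (i.e. $\wedge$ is a well-defined operation on $L_S$ which is commutative, associative and idempotent).
   Context: An AG-groupoid is a set $S$ with a binary operation satisfying $(ab)c=(cb)a$ for all $a,b,c\in S$. A left identity is an element $e$ with $ea=a$ for all $a\in S$. For nonempty subsets, $AB=\{ab:a\in A,b\in B\}$, $B^{2}=BB$. A bi-ideal of $S$ is a nonempty subset $B$ with $BB\subseteq B$ and $(BS)B\subseteq B$. *)

(* Defs.v *)
Definition AG_groupoid {S : Type} (op : S -> S -> S) : Prop :=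
  forall a b c : S, op (op a b) c = op (op c b) a.

Definition left_identity {S : Type} (op : S -> S -> S) (e : S) : Prop :=
  forall a : S, op e a = a.

Definition subset {S : Type} (A B : S -> Prop) : Prop :=
  forall x, A x -> B x.

Definition set_eq {S : Type} (A B : S -> Prop) : Prop :=
  forall x, A x <-> B x.

Definition set_inter {S : Type} (A B : S -> Prop) : S -> Prop :=
  fun x => A x /\ B x.

Definition setT {S : Type} : S -> Prop := fun _ => True.

Definition setmul {S : Type} (op : S -> S -> S) (A B : S -> Prop) : S -> Prop :=
  fun x => exists a b, A a /\ B b /\ x = op a b.

Definition bi_ideal {S : Type} (op : S -> S -> S) (B : S -> Prop) : Prop :=
  (exists x, B x) /\
  subset (setmul op B B) B /\
  subset (setmul op (setmul op B setT) B) B.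

(* Main.v *)
Require Import Defs.
From Stdlib Require Import Setoid.

Section S.
Variable (S : Type) (op : S -> S -> S).
Hypothesis hAG : AG_groupoid op.

Lemma medial a b c d : op (op a b) (op c d) = op (op a c) (op b d).
Proof. rewrite hAG, (hAG c d b), hAG. reflexivity. Qed.

Lemma lswap e (he : left_identity op e) a x y : op a (op x y) = op x (op a y).
Proof. transitivity (op (op e a) (op x y)); [rewrite he; reflexivity|]. rewrite medial, he. reflexivity. Qed.

Lemma bi_eq A B : set_eq A B -> bi_ideal op A -> bi_ideal op B.
Proof.
  intros E [[x Hx] [H1 H2]]. split; [exists x; apply E; auto|split].
  - intros z (a & b & Ha & Hb & ->). apply E, H1. exists a, b.
    split; [apply E; exact Ha|split; [apply E; exact Hb|reflexivity]].
  - intros z (u & b & (a & s & Ha & Hs & ->) & Hb & ->). apply E, H2.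
    exists (op a s), b. split; [exists a, s; split; [apply E; exact Ha|auto]|].
    split; [apply E; exact Hb|reflexivity].
Qed.

Lemma bi_inter A B : bi_ideal op A -> bi_ideal op B -> (exists x, A x /\ B x) ->
  bi_ideal op (set_inter A B).
Proof.
  intros [_ [A1 A2]] [_ [B1 B2]] Hx. split; [exact Hx|split].
  - intros z (a & b & [Ha Ha'] & [Hb Hb'] & ->). split.
    + apply A1. exists a, b; auto.
    + apply B1. exists a, b; auto.
  - intros z (u & b & (a & s & [Ha Ha'] & Hs & ->) & [Hb Hb'] & ->). split.
    + apply A2. exists (op a s), b. split; [exists a, s; auto|auto].
    + apply B2. exists (op a s), b. split; [exists a, s; auto|auto].
Qed.

Lemma SAA e (he : left_identity op e) A : bi_ideal op A -> set_eq (setmul op A A) A ->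
  forall s a a', A a -> A a' -> A (op (op s a) a').
Proof.
  intros [_ [_ A2]] E s a a' Ha Ha'. apply E in Ha.
  destruct Ha as (a1 & a2 & H1 & H2 & ->).
  rewrite (lswap e he). apply A2. exists (op a1 (op s a2)), a'.
  split; [exists a1, (op s a2); unfold setT; auto|auto].
Qed.

Lemma P1P2 e (he : left_identity op e) :
  (forall B, bi_ideal op B -> set_eq (setmul op B B) B) ->
  forall A B, bi_ideal op A -> bi_ideal op B ->
              set_eq (set_inter A B) (setmul op A B).
Proof.
  intros P1 A B HA HB x. split.
  - intros [Ha Hb]. assert (HI := bi_inter A B HA HB (ex_intro _ x (conj Ha Hb))).
    assert (Hx : set_inter A B x) by (split; auto).
    apply (P1 _ HI) in Hx.
    destruct Hx as (a & b & [Ha2 _] & [_ Hb2] & ->). exists a, b; auto.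
  - intros (a & b & Ha & Hb & ->). split.
    + apply (P1 _ HA) in Ha. destruct Ha as (a1 & a2 & H1 & H2 & ->).
      rewrite hAG. apply (SAA e he A HA (P1 _ HA)); auto.
    + apply (P1 _ HB) in Hb. destruct Hb as (b1 & b2 & H1 & H2 & ->).
      apply (P1 _ HB) in H1. destruct H1 as (c & d & Hc & Hd & ->).
      rewrite (lswap e he), hAG. apply (SAA e he B HB (P1 _ HB)); auto.
Qed.

End S.

Theorem proposition3 (S : Type) (op : S -> S -> S)
  (hAG : AG_groupoid op) (hle : exists e : S, left_identity op e) :
  let P1 := forall B, bi_ideal op B -> set_eq (setmul op B B) B in
  let P2 := forall A B, bi_ideal op A -> bi_ideal op B ->
              set_eq (set_inter A B) (setmul op A B) in
  let P3 :=
    (* closure: /\ is a well-defined operation on L_S *)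
    (forall A B, bi_ideal op A -> bi_ideal op B -> bi_ideal op (setmul op A B)) /\
    (* commutative *)
    (forall A B, bi_ideal op A -> bi_ideal op B ->
       set_eq (setmul op A B) (setmul op B A)) /\
    (* associative *)
    (forall A B C, bi_ideal op A -> bi_ideal op B -> bi_ideal op C ->
       set_eq (setmul op (setmul op A B) C) (setmul op A (setmul op B C))) /\
    (* idempotent *)
    (forall A, bi_ideal op A -> set_eq (setmul op A A) A) in
  (P1 <-> P2) /\ (P2 <-> P3).
Proof.
  destruct hle as [e he]. intros P1 P2 P3.
  assert (H12 : P1 -> P2) by exact (P1P2 S op hAG e he).
  assert (H21 : P2 -> P1).
  { intros H B HB x. rewrite <- (H B B HB HB x). unfold set_inter. tauto. }
  split; [tauto|split].
  - intros H. assert (Hc : forall A B, bi_ideal op A -> bi_ideal op B -> bi_ideal op (setmul op A B)).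
    { intros A B HA HB. apply (bi_eq S op (set_inter A B)); [exact (H A B HA HB)|].
      apply bi_inter; auto.
      destruct HA as [[a Ha] HA']. destruct HB as [[b Hb] HB'].
      exists (op a b). apply (H A B); [split; [exists a; exact Ha|exact HA']|split; [exists b; exact Hb|exact HB']|]. exists a, b; auto. }
    split; [exact Hc|split; [|split]].
    + intros A B HA HB x. rewrite <- (H A B HA HB x), <- (H B A HB HA x).
      unfold set_inter; tauto.
    + intros A B C HA HB HC x.
      rewrite <- (H _ C (Hc A B HA HB) HC x), <- (H A _ HA (Hc B C HB HC) x).
      pose proof (H A B HA HB x). pose proof (H B C HB HC x).
      unfold set_inter in *; tauto.
    + exact (H21 H).
  - intros (_ & _ & _ & H). exact (H12 H).
Qed.
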